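(* Let $\mathcal{N}$ denote the class of all networks $(X,A_X)$, where $X$ is a finite nonempty set and $A_X:X\times X\to\mathbb{R}$ satisfies $A_X(x,x')\ge 0$ for all $x,x'\in X$, with $A_X(x,x')=0$ if and only if $x=x'$ ($A_X$ need not be symmetric nor satisfy the triangle inequality). For a network $(X,A_X)$ define the unidirectional minimum chain cost $$\tilde u^{NR}_X(x,x')=\min_{C(x,x')}\ \max_{0\le i\le l-1}A_X(x_i,x_{i+1}),$$ where the minimum is over all chains $C(x,x')=[x=x_0,x_1,\dots,x_l=x']$ of nodes of $X$ from $x$ to $x'$, and set $$u^{NR}_X(x,x')=\max\big(\tilde u^{NR}_X(x,x'),\ \tilde u^{NR}_X(x',x)\big).$$ Let $\mathcal{H}^{NR}$ be the method assigning to each network $(X,A_X)$ the function $u^{NR}_X$. Then: (i) for every network $(X,A_X)\in\mathcal{N}$, $u^{NR}_X$ is an ultrametric on $X$; and (ii) $\mathcal{H}^{NR}$ satisfies the Axiom of Value (A1) and the Axiom of Transformation (A2).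
   Context: An ultrametric on a finite set $X$ is a function $u_X:X\times X\to\mathbb{R}$ that is nonnegative, symmetric ($u_X(x,x')=u_X(x',x)$), satisfies $u_X(x,x')=0$ iff $x=x'$, and satisfies the strong triangle inequality $u_X(x,x')\le\max\big(u_X(x,x''),u_X(x'',x')\big)$ for all $x,x',x''\in X$. A (hierarchical) clustering method $\mathcal{H}$ is a map assigning to every network $(X,A_X)$ an ultrametric $u_X$ on $X$ (equivalently a dendrogram on $X$). Axiom of Value (A1): for every two-node network $X=\{p,q\}$ with $A_X(p,q)=\alpha$, $A_X(q,p)=\beta$ (with $\alpha,\beta>0$), the output ultrametric satisfies $u_X(p,q)=\max(\alpha,\beta)$. Axiom of Transformation (A2): for any two networks $(X,A_X)$, $(Y,A_Y)$ and any map $\phi:X\to Y$ with $A_X(x,x')\ge A_Y(\phi(x),\phi(x'))$ for all $x,x'\in X$, the output ultrametrics $u_X=\mathcal{H}(X,A_X)$ and $u_Y=\mathcal{H}(Y,A_Y)$ satisfy $u_X(x,x')\ge u_Y(\phi(x),\phi(x'))$ for all $x,x'\in X$. *)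

(* Defs.v *)
From mathcomp Require Import all_boot all_order all_algebra.
From mathcomp Require Import boolp classical_sets reals.
Set Implicit Arguments. Unset Strict Implicit. Unset Printing Implicit Defensive.
Import Order.TTheory GRing.Theory Num.Theory.
Local Open Scope ring_scope.
Local Open Scope classical_set_scope.

Section Defs.
Variable R : realType.

Definition is_network (X : finType) (A : X -> X -> R) : Prop :=
  (forall x x', 0 <= A x x') /\ (forall x x', A x x' = 0 <-> x = x').

Definition is_ultrametric (X : finType) (u : X -> X -> R) : Prop :=
  [/\ (forall x x', 0 <= u x x'),
      (forall x x', u x x' = u x' x),
      (forall x x', u x x' = 0 <-> x = x') &
      (forall x x' x'', u x x' <= Num.max (u x x'') (u x'' x'))].

(* A chain [x = x_0, x_1, ..., x_l] is represented by its start x and the list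
   s = [x_1; ...; x_l]; it ends at last x s.  Its cost is
   max_{0 <= i <= l-1} A x_i x_{i+1} (the max over the empty range, i.e. for
   the trivial chain l = 0, is taken to be 0). *)
Definition chain_cost (X : finType) (A : X -> X -> R) (x : X) (s : seq X) : R :=
  \big[Num.max/0]_(c <- pairmap A x s) c.

(* Unidirectional minimum chain cost: min over all chains from x to x'
   (expressed as the infimum of the set of chain costs; the minimum is attained). *)
Definition uNR_tilde (X : finType) (A : X -> X -> R) (x x' : X) : R :=
  inf [set c | exists s : seq X, last x s = x' /\ c = chain_cost A x s].

Definition uNR (X : finType) (A : X -> X -> R) (x x' : X) : R :=
  Num.max (uNR_tilde A x x') (uNR_tilde A x' x).

End Defs.

(* Main.v *)
Require Import Defs.
From mathcomp Require Import all_boot all_order all_algebra.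
From mathcomp Require Import boolp classical_sets reals.
Import Order.TTheory GRing.Theory Num.Theory.
Local Open Scope ring_scope.
Local Open Scope classical_set_scope.

Set Implicit Arguments. Unset Strict Implicit.
Section Helpers.
Variable R : realType.

Lemma cost_cons (X : finType) (A : X -> X -> R) x y s :
  chain_cost A x (y :: s) = Num.max (A x y) (chain_cost A y s).
Proof. by rewrite /chain_cost /= big_cons. Qed.

Lemma cost_nil (X : finType) (A : X -> X -> R) x : chain_cost A x [::] = 0.
Proof. by rewrite /chain_cost /= big_nil. Qed.

Lemma cost_ge0 (X : finType) (A : X -> X -> R) x s : 0 <= chain_cost A x s.
Proof.
elim: s x => [|y s IH] x; first by rewrite cost_nil.
by rewrite cost_cons le_max IH orbT.
Qed.

Lemma cost_cat (X : finType) (A : X -> X -> R) x s1 s2 :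
  chain_cost A x (s1 ++ s2) =
  Num.max (chain_cost A x s1) (chain_cost A (last x s1) s2).
Proof.
elim: s1 x => [|y s IH] x /=.
  by rewrite cost_nil; apply/esym/max_idPr; apply: cost_ge0.
by rewrite !cost_cons IH maxA.
Qed.

Lemma cost_map (X Y : finType) (AX : X -> X -> R) (AY : Y -> Y -> R)
  (phi : X -> Y) :
  (forall x x', AY (phi x) (phi x') <= AX x x') ->
  forall x s, chain_cost AY (phi x) (map phi s) <= chain_cost AX x s.
Proof.
move=> H x s; elim: s x => [|y s IH] x /=; first by rewrite !cost_nil.
rewrite !cost_cons ge_max !le_max H IH /=.
by rewrite orbT.
Qed.

Lemma cost_first (X : finType) (A : X -> X -> R) x s :
  last x s != x -> exists2 b, b != x & A x b <= chain_cost A x s.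
Proof.
elim: s => [|y s IH] /=; first by rewrite eqxx.
case: (eqVneq y x) => [-> /IH [b bx Hb]|yx _].
  by exists b => //; rewrite cost_cons le_max Hb orbT.
by exists y => //; rewrite cost_cons le_max lexx.
Qed.

Definition CS (X : finType) (A : X -> X -> R) x y :=
  [set c | exists s : seq X, last x s = y /\ c = chain_cost A x s].

Lemma CS_ne (X : finType) (A : X -> X -> R) x y : nonempty (CS A x y).
Proof. by exists (chain_cost A x [:: y]); exists [:: y]. Qed.

Lemma CS_lb (X : finType) (A : X -> X -> R) x y : has_lbound (CS A x y).
Proof. by exists 0 => _ [s [_ ->]]; apply: cost_ge0. Qed.

Lemma tilde_le (X : finType) (A : X -> X -> R) x s :
  uNR_tilde A x (last x s) <= chain_cost A x s.
Proof. by apply: (ge_inf (CS_lb A x (last x s))); exists s. Qed.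

Lemma tilde_ge (X : finType) (A : X -> X -> R) x y b :
  (forall s, last x s = y -> b <= chain_cost A x s) -> b <= uNR_tilde A x y.
Proof.
move=> H; apply: lb_le_inf; first exact: CS_ne.
by move=> _ [s [Hs ->]]; apply: H.
Qed.

Lemma tilde_ge0 (X : finType) (A : X -> X -> R) x y : 0 <= uNR_tilde A x y.
Proof. by apply: tilde_ge => s _; apply: cost_ge0. Qed.

Lemma tilde_refl (X : finType) (A : X -> X -> R) x : uNR_tilde A x x = 0.
Proof.
apply/eqP; rewrite eq_le tilde_ge0 andbT.
by have := tilde_le A x [::]; rewrite cost_nil.
Qed.

Lemma tilde_tri (X : finType) (A : X -> X -> R) x y z :
  uNR_tilde A x y <= Num.max (uNR_tilde A x z) (uNR_tilde A z y).
Proof.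
rewrite leNgt; apply/negP; rewrite gt_max => /andP [H1 H2].
have [c1 [s1 [L1 ->]] C1] := inf_lt (CS_ne A x z) H1.
have [c2 [s2 [L2 ->]] C2] := inf_lt (CS_ne A z y) H2.
have := tilde_le A x (s1 ++ s2).
rewrite last_cat L1 L2 cost_cat L1 => H.
have : Num.max (chain_cost A x s1) (chain_cost A z s2) < uNR_tilde A x y.
  by rewrite gt_max C1 C2.
by rewrite ltNge H.
Qed.

Lemma tilde_pos (X : finType) (A : X -> X -> R) x y :
  is_network A -> x != y -> 0 < uNR_tilde A x y.
Proof.
move=> [A0 AE] xy.
have Pi : (fun b => b != x) y by rewrite eq_sym.
case: (@arg_minP _ R X y (fun b => b != x) (fun b => A x b) Pi) => m mx Hm.
have H1 : 0 < A x m.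
  rewrite lt_neqAle A0 andbT; apply/eqP => /esym/AE E.
  by move: mx; rewrite E eqxx.
apply: (lt_le_trans H1).
apply: tilde_ge => s Ls.
have Lx : last x s != x by rewrite Ls eq_sym.
have [b bx Hb] := cost_first A Lx.
exact: (le_trans (Hm b bx) Hb).
Qed.

End Helpers.

Theorem proposition2 (R : realType) :
  (* (i) u^NR_X is an ultrametric for every network in N *)
  (forall (X : finType) (A : X -> X -> R),
      (0 < #|X|)%N -> is_network A -> is_ultrametric (uNR A)) /\
  (* (ii) Axiom of Value (A1) *)
  (forall (X : finType) (A : X -> X -> R) (p q : X) (alpha beta : R),
      #|X| = 2%N -> p != q -> 0 < alpha -> 0 < beta ->
      is_network A -> A p q = alpha -> A q p = beta ->
      uNR A p q = Num.max alpha beta) /\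
  (* (ii) Axiom of Transformation (A2) *)
  (forall (X Y : finType) (AX : X -> X -> R) (AY : Y -> Y -> R) (phi : X -> Y),
      (0 < #|X|)%N -> (0 < #|Y|)%N -> is_network AX -> is_network AY ->
      (forall x x', AY (phi x) (phi x') <= AX x x') ->
      forall x x', uNR AY (phi x) (phi x') <= uNR AX x x').
Proof.
split; [|split].
- move=> X A _ HA; split.
  + by move=> x x'; rewrite /uNR le_max tilde_ge0.
  + by move=> x x'; rewrite /uNR maxC.
  + move=> x x'; split => [H|->]; last by rewrite /uNR tilde_refl maxxx.
    apply/eqP; apply/negP => /negP xx.
    have Hp := tilde_pos HA xx.
    have : uNR_tilde A x x' <= uNR A x x' by rewrite /uNR le_max lexx.
    by rewrite H leNgt Hp.
  + move=> x x' x''; rewrite /uNR ge_max; apply/andP; split.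
      apply: (le_trans (tilde_tri A x x' x'')).
      by rewrite ge_max !le_max !lexx /= ?orbT.
    apply: (le_trans (tilde_tri A x' x x'')).
    by rewrite ge_max !le_max !lexx /= ?orbT.
- move=> X A p q alpha beta X2 pq a0 b0 HA Apq Aqp.
  have two : forall b a : X, b != a -> forall c : X, c != a -> c = b.
    move=> b a ba c ca; case: (eqVneq c b) => // cb; exfalso.
    have U : uniq [:: a; b; c].
      by rewrite /= !inE negb_or eq_sym ba eq_sym ca eq_sym cb.
    have := max_card (mem [:: a; b; c]).
    by rewrite (card_uniqP U) X2.
  have T : forall a b, a != b -> uNR_tilde A a b = A a b.
    move=> a b ab; apply/eqP; rewrite eq_le; apply/andP; split.
      have := tilde_le A a [:: b]; rewrite /= cost_cons cost_nil.
      by move/le_trans; apply; rewrite ge_max lexx (proj1 HA).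
    apply: tilde_ge => s Ls.
    have La : last a s != a by rewrite Ls eq_sym.
    have [c ca Hc] := cost_first A La.
    by rewrite -(two b a _ c ca) // eq_sym.
  by rewrite /uNR !T // 1?eq_sym // Apq Aqp.
- move=> X Y AX AY phi _ _ _ _ H x x'.
  rewrite /uNR ge_max !le_max.
  have K : forall a b, uNR_tilde AY (phi a) (phi b) <= uNR_tilde AX a b.
    move=> a b; apply: tilde_ge => s Ls.
    apply: le_trans (cost_map H a s).
    by rewrite -Ls -(last_map phi s a); apply: tilde_le.
  by rewrite !K orbT.
Qed.
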